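(* Let $\alpha>0$, $\beta,\eta,\kappa\in\mathbb{R}$, $\rho>0$, $p\geq 1$ and $q$ with $\frac1p+\frac1q=1$, and $0\le a<x$. Let $f,g$ be two positive functions on $[0,\infty)$ with $f,g\in X^{p}_{c}(a,x)$ (for some $c\in\mathbb{R}$), such that ${}^{\rho}\mathcal{I}^{\alpha,\beta}_{a+,\eta,\kappa}f(x)<\infty$ and ${}^{\rho}\mathcal{I}^{\alpha,\beta}_{a+,\eta,\kappa}g(x)<\infty$. If there are real numbers $m,M>0$ with $0<m\leq \frac{f(t)}{g(t)}\leq M$ for all $t\in[a,x]$, then $$\left({}^{\rho}\mathcal{I}^{\alpha,\beta}_{a+,\eta,\kappa}f(x)\right)^{1/p}\left({}^{\rho}\mathcal{I}^{\alpha,\beta}_{a+,\eta,\kappa}g(x)\right)^{1/q}\leq\left(\frac{M}{m}\right)^{\frac{1}{pq}}\,{}^{\rho}\mathcal{I}^{\alpha,\beta}_{a+,\eta,\kappa}\big(f^{1/p}g^{1/q}\big)(x).$$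
   Context: For $c\in\mathbb{R}$ and $1\le p<\infty$, $X^{p}_{c}(a,b)$ denotes the space of Lebesgue measurable functions $f$ on $(a,b)$ with $\left(\int_a^b |t^{c}f(t)|^{p}\,\frac{dt}{t}\right)^{1/p}<\infty$. For $\alpha>0$, $\beta,\eta,\kappa\in\mathbb{R}$, $\rho>0$, $0\le a<x$, and a function $\varphi$, the generalized (Katugampola) fractional integral is $${}^{\rho}\mathcal{I}^{\alpha,\beta}_{a+,\eta,\kappa}\varphi(x)=\frac{\rho^{1-\beta}x^{\kappa}}{\Gamma(\alpha)}\int_{a}^{x}\frac{\tau^{\rho(\eta+1)-1}}{(x^{\rho}-\tau^{\rho})^{1-\alpha}}\varphi(\tau)\,d\tau,$$ whenever the integral exists. ${}^{\rho}\mathcal{I}^{\alpha,\beta}_{a+,\eta,\kappa}(f^{1/p}g^{1/q})(x)$ means the operator applied to $\tau\mapsto f(\tau)^{1/p}g(\tau)^{1/q}$, evaluated at $x$. *)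

(* Defs.v *)
From HB Require Import structures.
From mathcomp Require Import all_boot all_order all_algebra.
From mathcomp Require Import all_classical all_reals all_analysis.
Set Implicit Arguments. Unset Strict Implicit. Unset Printing Implicit Defensive.
Import Order.TTheory GRing.Theory Num.Theory.
Local Open Scope classical_set_scope.
Local Open Scope ring_scope.

Definition Gamma_fun (R : realType) (a : R) : R :=
  Rintegral (@lebesgue_measure R) `]0, +oo[%classic
    (fun t => t `^ (a - 1) * expR (- t)).

Definition Xpc (R : realType) (p c a b : R) (f : R -> R) : Prop :=
  measurable_fun `]a, b[%classic f /\
  (\int[@lebesgue_measure R]_(t in `]a, b[%classic)
      ((`|t `^ c * f t| `^ p) / t)%:E < +oo)%E.

Definition katugampola (R : realType) (rho alpha beta eta kappa a : R)
    (phi : R -> R) (x : R) : \bar R :=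
  ((rho `^ (1 - beta) * x `^ kappa / Gamma_fun alpha)%:E *
   \int[@lebesgue_measure R]_(tau in `]a, x[%classic)
     ((tau `^ (rho * (eta + 1) - 1) / (x `^ rho - tau `^ rho) `^ (1 - alpha))
        * phi tau)%:E)%E.

(* Main.v *)
Require Import Defs.
From HB Require Import structures.
From mathcomp Require Import all_boot all_order all_algebra.
From mathcomp Require Import all_classical all_reals all_analysis.
From mathcomp Require Import measurable_realfun.
Import Order.TTheory GRing.Theory Num.Theory.
Local Open Scope classical_set_scope.
Local Open Scope ring_scope.

Lemma kernel_meas (R : realType) (x c1 c2 rho : R) :
  measurable_fun [set: R] (fun tau : R => tau `^ c1 / (x `^ rho - tau `^ rho) `^ c2).
Proof.
have -> : (fun tau : R => tau `^ c1 / (x `^ rho - tau `^ rho) `^ c2) =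
  (fun tau => tau `^ c1 * ((x `^ rho - tau `^ rho) `^ c2) `^ (-1)).
  by apply/funext => t; rewrite powR_inv1 // powR_ge0.
apply: measurable_funM; first exact: measurable_powR.
apply: (measurableT_comp (measurable_powR _)).
apply: (measurableT_comp (measurable_powR _)).
apply: measurable_funB; first exact: measurable_cst.
exact: measurable_powR.
Qed.

Lemma powRVl (R : realType) (y s : R) : 0 <= y -> (y^-1) `^ s = (y `^ s)^-1.
Proof. by move=> y0; rewrite -powR_inv1 // -powRrM mulN1r powRN. Qed.

Lemma final_ineq (R : realType) (r s m M A B h : R) :
  0 <= r -> 0 <= s -> r + s = 1 -> 0 < m -> 0 < M -> 0 <= A -> 0 <= B -> 0 <= h ->
  (M `^ s)^-1 * A <= h -> m `^ r * B <= h ->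
  A `^ r * B `^ s <= (M / m) `^ (r * s) * h.
Proof.
move=> r0 s0 rs1 m0 M0 A0 B0 h0 hA hB.
have Ms : 0 < M `^ s by apply: powR_gt0.
have mr : 0 < m `^ r by apply: powR_gt0.
have A1 : A <= M `^ s * h.
  by rewrite -ler_pdivrMl // -[_ / _]mul1r.
have B1 : B <= (m `^ r)^-1 * h.
  by rewrite ler_pdivlMl // ?invr_gt0 // invrK.
have A2 : A `^ r <= M `^ (s * r) * h `^ r.
  rewrite powRrM -powRM ?powR_ge0 //.
  by apply: (ge0_ler_powR r0); rewrite ?nnegrE // mulr_ge0 ?powR_ge0.
have B2 : B `^ s <= (m `^ (r * s))^-1 * h `^ s.
  rewrite powRrM -powRVl ?powR_ge0 // -powRM ?invr_ge0 ?powR_ge0 //.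
  by apply: (ge0_ler_powR s0); rewrite ?nnegrE // mulr_ge0 ?invr_ge0 ?powR_ge0.
have -> : (M / m) `^ (r * s) * h = (M `^ (s * r) * h `^ r) * ((m `^ (r * s))^-1 * h `^ s).
  rewrite mulrACA -powRD; last by rewrite rs1 oner_eq0.
  rewrite rs1 powRr1 // powRM ?invr_ge0 ?ltW // powRVl ?ltW // [s * r]mulrC //.
apply: ler_pM => //; by rewrite powR_ge0.
Qed.

Lemma int_cmp (R : realType) (D : set R) (mD : measurable D) (u v : R -> R) (k : R) :
  0 <= k -> measurable_fun D u -> measurable_fun D v ->
  (forall t, D t -> 0 <= u t) -> (forall t, D t -> k * u t <= v t) ->
  (k%:E * \int[@lebesgue_measure R]_(t in D) (u t)%:E <=
   \int[@lebesgue_measure R]_(t in D) (v t)%:E)%E.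
Proof.
move=> k0 mu mv u0 kuv.
have u0' : forall t, D t -> (0 <= (u t)%:E)%E by move=> t Dt; rewrite lee_fin u0.
have mu' : measurable_fun D (EFin \o u) by exact/measurable_EFinP.
have E := ge0_integralZl_EFin (@lebesgue_measure R) mD u0' mu' k0.
rewrite /= in E; rewrite -E.
apply: ge0_le_integral => //.
- by move=> t Dt /=; rewrite mule_ge0 // lee_fin // u0.
- by apply/measurable_EFinP; apply: measurable_funM => //; exact: measurable_cst.
- exact/measurable_EFinP.
Qed.

Theorem theorem10 (R : realType) (alpha beta eta kappa rho p a x m M : R)
    (f g : R -> R) :
  0 < alpha -> 0 < rho -> 1 <= p -> 0 <= a -> a < x ->
  (forall t, 0 <= t -> 0 < f t) -> (forall t, 0 <= t -> 0 < g t) ->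
  (exists c : R, Xpc p c a x f /\ Xpc p c a x g) ->
  (katugampola rho alpha beta eta kappa a f x < +oo)%E ->
  (katugampola rho alpha beta eta kappa a g x < +oo)%E ->
  0 < m -> 0 < M ->
  (forall t, a <= t <= x -> m <= f t / g t <= M) ->
  (((fine (katugampola rho alpha beta eta kappa a f x)) `^ (1 / p) *
   (fine (katugampola rho alpha beta eta kappa a g x)) `^ (1 - 1 / p))%:E
  <= ((M / m) `^ (1 / p * (1 - 1 / p)))%:E *
     katugampola rho alpha beta eta kappa a
       (fun t => (f t `^ (1 / p) * g t `^ (1 - 1 / p))%R) x)%E.
Proof.
move=> alpha0 rho0 p1 a0 ax fpos gpos [c [[mf _] [mg _]]] Kf Kg m0 M0 fg.
have p0 : 0 < p by apply: lt_le_trans p1.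
set r := 1 / p. set s := 1 - 1 / p.
have r0 : 0 <= r by rewrite /r divr_ge0 // ltW.
have s0 : 0 <= s by rewrite /s subr_ge0 ler_pdivrMr // mul1r.
have rs1 : r + s = 1 by rewrite /r /s addrC subrK.
set D := `]a, x[%classic.
have mD : measurable D by exact: measurable_itv.
have inD t : D t -> [/\ 0 < t, a <= t <= x, 0 < f t & 0 < g t].
  rewrite /D /= in_itv /= => /andP[hat htx].
  have t0 : 0 < t by apply: le_lt_trans hat.
  by split => //; [rewrite !ltW | apply: fpos; rewrite ltW | apply: gpos; rewrite ltW].
set w := fun tau : R => tau `^ (rho * (eta + 1) - 1) / (x `^ rho - tau `^ rho) `^ (1 - alpha).
have mw : measurable_fun D w by apply: measurable_funTS; exact: kernel_meas.
have w0 t : 0 <= w t by rewrite /w divr_ge0 ?powR_ge0.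
set C := rho `^ (1 - beta) * x `^ kappa / Gamma_fun alpha.
have C0 : 0 <= C.
  rewrite /C divr_ge0 ?mulr_ge0 ?powR_ge0 // /Gamma_fun Rintegral_ge0 // => t _.
  by rewrite mulr_ge0 ?powR_ge0 ?expR_ge0.
set h := fun t => f t `^ r * g t `^ s.
have mh : measurable_fun D h.
  apply: measurable_funM; apply: (measurableT_comp (measurable_powR _)) => //.
have KE (u : R -> R) : katugampola rho alpha beta eta kappa a u x =
    (C%:E * \int[@lebesgue_measure R]_(t in D) (w t * u t)%:E)%E by [].
have fgt t : D t -> m * g t <= f t /\ f t <= M * g t.
  move=> /inD[_ /fg /andP[h1 h2] ft gt].
  by split; [rewrite -ler_pdivlMr // | rewrite -ler_pdivrMr].
have I1 : (((M `^ s)^-1)%:E * \int[@lebesgue_measure R]_(t in D) (w t * f t)%:E <=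
    \int[@lebesgue_measure R]_(t in D) (w t * h t)%:E)%E.
  apply: int_cmp => //.
  - by rewrite invr_ge0 powR_ge0.
  - exact: measurable_funM.
  - exact: measurable_funM.
  - by move=> t /inD[_ _ ft _]; rewrite mulr_ge0 // ltW.
  move=> t Dt; have [_ _ ft gt] := inD t Dt; have f0 := ltW ft; have g0 := ltW gt; have [_ fM] := fgt t Dt.
  rewrite mulrCA ler_wpM2l //.
  have -> : f t = f t `^ r * f t `^ s.
    by rewrite -powRD ?rs1 ?powRr1 ?oner_eq0 // ltW.
  rewrite mulrCA /h ler_wpM2l ?powR_ge0 // ler_pdivrMl ?powR_gt0 //.
  rewrite -powRM ?(ltW M0) ?(ltW gt) //.
  apply: (ge0_ler_powR s0) => //.
  by rewrite nnegrE; exact: (mulr_ge0 (ltW M0) g0).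
have I2 : ((m `^ r)%:E * \int[@lebesgue_measure R]_(t in D) (w t * g t)%:E <=
    \int[@lebesgue_measure R]_(t in D) (w t * h t)%:E)%E.
  apply: int_cmp => //.
  - by rewrite powR_ge0.
  - exact: measurable_funM.
  - exact: measurable_funM.
  - by move=> t /inD[_ _ _ gt]; rewrite mulr_ge0 // ltW.
  move=> t Dt; have [_ _ ft gt] := inD t Dt; have f0 := ltW ft; have g0 := ltW gt; have [mf' _] := fgt t Dt.
  rewrite mulrCA ler_wpM2l //.
  have -> : g t = g t `^ r * g t `^ s.
    by rewrite -powRD ?rs1 ?powRr1 ?oner_eq0 // ltW.
  rewrite mulrA /h ler_wpM2r ?powR_ge0 // -powRM ?(ltW m0) ?(ltW gt) //.
  apply: (ge0_ler_powR r0) => //.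
  by rewrite nnegrE; exact: (mulr_ge0 (ltW m0) g0).
have Ige0 (u : R -> R) : (forall t, D t -> 0 <= u t) ->
    (0 <= C%:E * \int[@lebesgue_measure R]_(t in D) (w t * u t)%:E)%E.
  move=> u0; rewrite mule_ge0 ?lee_fin // integral_ge0 // => t Dt.
  by rewrite lee_fin mulr_ge0 // u0.
have Kf0 := Ige0 f (fun t Dt => let: And4 _ _ ft _ := inD t Dt in ltW ft).
have Kg0 := Ige0 g (fun t Dt => let: And4 _ _ _ gt := inD t Dt in ltW gt).
have Kh0 := Ige0 h (fun t Dt => mulr_ge0 (powR_ge0 _ _) (powR_ge0 _ _)).
rewrite -!KE in Kf0 Kg0 Kh0.
have K1 : (((M `^ s)^-1)%:E * katugampola rho alpha beta eta kappa a f x <=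
    katugampola rho alpha beta eta kappa a h x)%E.
  by rewrite !KE muleCA; apply: lee_wpmul2l; rewrite ?lee_fin.
have K2 : ((m `^ r)%:E * katugampola rho alpha beta eta kappa a g x <=
    katugampola rho alpha beta eta kappa a h x)%E.
  by rewrite !KE muleCA; apply: lee_wpmul2l; rewrite ?lee_fin.
have EA : katugampola rho alpha beta eta kappa a f x =
    (fine (katugampola rho alpha beta eta kappa a f x))%:E.
  by rewrite fineK // ge0_fin_numE.
have EB : katugampola rho alpha beta eta kappa a g x =
    (fine (katugampola rho alpha beta eta kappa a g x))%:E.
  by rewrite fineK // ge0_fin_numE.
rewrite EA in K1 Kf0; rewrite EB in K2 Kg0.
move: (fine _) (fine _) K1 K2 Kf0 Kg0 Kh0.
rewrite -/h.
case: (katugampola rho alpha beta eta kappa a h x) => [hv| |] A B K1 K2 A0 B0 H0.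
- rewrite -EFinM lee_fin; apply: final_ineq => //; rewrite -?lee_fin //.
- by rewrite gt0_muley ?leey // lte_fin powR_gt0 // divr_gt0.
- by [].
Qed.
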